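(* In the setting described in the context, let $R=I_m-H\bar H$. Then the induced norm $\|R\|=\sqrt{\lambda_{\max}(R^TR)}$ equals $1$.
   Context: Let $V=\{1,\ldots,N\}$, $N\ge 2$, and let $G_I=(V,E_I)$ be a connected undirected graph which is not complete, with adjacency matrix $A$; let $B=A+I_N$. For $i\in V$ let $N_I(i)$ be the set of neighbors of $i$ in $G_I$, $\tilde N_I(i)=N_I(i)\cup\{i\}$, $m_i=\deg_{G_I}(i)+1$, $m=\sum_{i=1}^N m_i$. For $i,j\in V$ set $s_{ij}=\sum_{l=1}^{j}B(i,l)+\sum_{r=1}^{i-1}m_r$ (the last sum is $0$ for $i=1$). Let $e_1,\ldots,e_m$ be the standard basis of $\mathbb{R}^m$ and define $E_j^i=e_{s_{ij}}$ if $j\in\tilde N_I(i)$ and $E_j^i=\mathbf{0}_m$ otherwise. Let $H=\big[\sum_{i=1}^N E_1^i,\ldots,\sum_{i=1}^N E_N^i\big]\in\mathbb{R}^{m\times N}$ and $\bar H=\mathrm{diag}(1/m_1,\ldots,1/m_N)H^T\in\mathbb{R}^{N\times m}$. *)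

(* Defs.v *)
From HB Require Import structures.
From mathcomp Require Import all_boot all_order all_algebra.
Set Implicit Arguments. Unset Strict Implicit. Unset Printing Implicit Defensive.
Import Order.TTheory GRing.Theory Num.Theory.
Local Open Scope ring_scope.

(* Vertices V = {1..N} are represented 0-based by 'I_N; the graph G_I by a
   relation e : rel 'I_N (assumed symmetric and irreflexive in the theorem). *)

Definition Bm (N : nat) (e : rel 'I_N) (i l : 'I_N) : nat := (e i l || (i == l)).

Definition inNt (N : nat) (e : rel 'I_N) (i j : 'I_N) : bool := e i j || (j == i).

Definition mdeg (N : nat) (e : rel 'I_N) (i : 'I_N) : nat := (#|[set j | e i j]|).+1.

Definition mtot (N : nat) (e : rel 'I_N) : nat := (\sum_(i < N) mdeg e i)%N.

(* s_ij = sum_{l <= j} B(i,l) + sum_{r < i} m_r  (1-based value; the basis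
   vector e_{s_ij} is the row with 0-based index s_ij - 1) *)
Definition sidx (N : nat) (e : rel 'I_N) (i j : 'I_N) : nat :=
  (\sum_(l < N | (l <= j)%N) Bm e i l + \sum_(r < N | (r < i)%N) mdeg e r)%N.

(* H = [sum_i E^i_1, ..., sum_i E^i_N] *)
Definition Hmx (R : nzRingType) (N : nat) (e : rel 'I_N) : 'M[R]_(mtot e, N) :=
  \matrix_(k, j) \sum_(i < N)
     (if inNt e i j && (nat_of_ord k == (sidx e i j).-1) then 1 else 0).

Definition Hbar (R : fieldType) (N : nat) (e : rel 'I_N) : 'M[R]_(N, mtot e) :=
  diag_mx (\row_i ((mdeg e i)%:R)^-1) *m (Hmx R e)^T.

Definition Rmx (R : fieldType) (N : nat) (e : rel 'I_N) : 'M[R]_(mtot e) :=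
  1%:M - Hmx R e *m Hbar R e.

Definition is_lambda_max (R : realFieldType) (n : nat) (A : 'M[R]_n) (l : R) : Prop :=
  eigenvalue A l /\ forall a, eigenvalue A a -> a <= l :> R.


Definition induced_norm_is (R : rcfType) (n : nat) (M : 'M[R]_n) (r : R) : Prop :=
  exists l, is_lambda_max (M^T *m M) l /\ r = Num.sqrt l.

(* Main.v *)
Require Import Defs.
From HB Require Import structures.
From mathcomp Require Import all_boot all_order all_algebra.
From mathcomp Require Import zify.
Import Order.TTheory GRing.Theory Num.Theory.
Set Implicit Arguments. Unset Strict Implicit. Unset Printing Implicit Defensive.

Definition cB (N : nat) (e : rel 'I_N) (i j : 'I_N) : nat :=
  (\sum_(l < N | (l <= j)%N) Bm e i l)%N.
Definition off (N : nat) (e : rel 'I_N) (i : 'I_N) : nat :=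
  (\sum_(r < N | (r < i)%N) mdeg e r)%N.
Definition gi (N : nat) (e : rel 'I_N) (i j : 'I_N) : nat := (sidx e i j).-1.

Lemma sumB N (e : rel 'I_N) (Hirr : irreflexive e) i :
  (\sum_(l < N) Bm e i l)%N = mdeg e i.
Proof.
rewrite /mdeg.
have -> : #|[set j | e i j]| = (\sum_(l < N) e i l)%N.
  rewrite -sum1_card big_mkcond /=; apply: eq_bigr => l _; rewrite in_set; by case: (e i l).
rewrite /Bm (bigD1 i) //= [in RHS](bigD1 i) //= Hirr eqxx add0n add1n; congr S.
apply: eq_bigr => l Hl; rewrite eq_sym (negbTE Hl) orbF; by case: (e i l).
Qed.

Lemma cB_le N (e : rel 'I_N) (Hirr : irreflexive e) i j : (cB e i j <= mdeg e i)%N.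
Proof.
rewrite -(sumB Hirr i) /cB [X in (_ <= X)%N](bigID (fun l : 'I_N => (l <= j)%N)) /=.
exact: leq_addr.
Qed.

Lemma cB_pos N (e : rel 'I_N) i j : inNt e i j -> (0 < cB e i j)%N.
Proof.
move=> H; rewrite /cB (bigD1 j) //= /Bm.
by move: H; rewrite /inNt eq_sym => ->.
Qed.

Lemma cB_mono N (e : rel 'I_N) (i j j' : 'I_N) : (j < j')%N ->
  (cB e i j + Bm e i j' <= cB e i j')%N.
Proof.
move=> Hjj; rewrite /cB !(big_mkcond (fun l : 'I_N => (l <= _)%N)) /=.
rewrite [X in (_ + X <= _)%N](_ : _ = \sum_(l < N) (if l == j' then Bm e i l else 0))%N;
  last by rewrite -big_mkcond big_pred1_eq.
rewrite -big_split /=; apply: leq_sum => l _.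
case: eqP => [->|_]; first by rewrite leqnn (leqNgt j' j) Hjj.
rewrite addn0; case: ifP => H //; by rewrite (leq_trans H (ltnW Hjj)).
Qed.

Lemma off_mono N (e : rel 'I_N) (i i' : 'I_N) : (i < i')%N ->
  (off e i + mdeg e i <= off e i')%N.
Proof.
move=> Hii; rewrite /off !(big_mkcond (fun l : 'I_N => (l < _)%N)) /=.
rewrite [X in (_ + X <= _)%N](_ : _ = \sum_(l < N) (if l == i then mdeg e l else 0))%N;
  last by rewrite -big_mkcond big_pred1_eq.
rewrite -big_split /=; apply: leq_sum => l _.
case: eqP => [->|_]; first by rewrite ltnn Hii.
rewrite addn0; case: ifP => H //; by rewrite (ltn_trans H Hii).
Qed.

Lemma off_tot N (e : rel 'I_N) (i : 'I_N) : (off e i + mdeg e i <= mtot e)%N.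
Proof.
rewrite /off /mtot !(big_mkcond (fun l : 'I_N => (l < _)%N)) /=.
rewrite [X in (_ + X <= _)%N](_ : _ = \sum_(l < N) (if l == i then mdeg e l else 0))%N;
  last by rewrite -big_mkcond big_pred1_eq.
rewrite -big_split /=; apply: leq_sum => l _.
case: eqP => [->|_]; first by rewrite ltnn.
by rewrite addn0; case: ifP.
Qed.

Lemma gi_bounds N (e : rel 'I_N) (Hirr : irreflexive e) i j : inNt e i j ->
  (off e i <= gi e i j)%N /\ (gi e i j < off e i + mdeg e i)%N.
Proof.
move=> H; have := cB_pos H; have := cB_le Hirr i j.
rewrite /gi /sidx -/(cB e i j) -/(off e i); lia.
Qed.

Lemma gi_lt N (e : rel 'I_N) (Hirr : irreflexive e) i j : inNt e i j ->
  (gi e i j < mtot e)%N.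
Proof.
move=> H; have [_ h] := gi_bounds Hirr H; have := off_tot e i; lia.
Qed.

Lemma gi_inj N (e : rel 'I_N) (Hirr : irreflexive e) (i j i' j' : 'I_N) :
  inNt e i j -> inNt e i' j' -> gi e i j = gi e i' j' -> i = i' /\ j = j'.
Proof.
move=> H H' Hg.
have [a b] := gi_bounds Hirr H; have [a' b'] := gi_bounds Hirr H'.
have Ei : i = i'.
  case: (ltngtP i i') => [lt|lt|/val_inj //].
  - have := off_mono e lt; lia.
  - have := off_mono e lt; lia.
subst i'; split=> //.
have Hc : cB e i j = cB e i j'.
  move: Hg; rewrite /gi /sidx -/(cB e i j) -/(cB e i j') -/(off e i).
  have := cB_pos H; have := cB_pos H'; lia.
have Bj : Bm e i j = 1%N by rewrite /Bm; move: H; rewrite /inNt eq_sym => ->.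
have Bj' : Bm e i j' = 1%N by rewrite /Bm; move: H'; rewrite /inNt eq_sym => ->.
case: (ltngtP j j') => [lt|lt|/val_inj //].
- have := cB_mono e i lt; lia.
- have := cB_mono e i lt; lia.
Qed.

Lemma key_nat N (e : rel 'I_N) (Hsym : symmetric e) (Hirr : irreflexive e) (j j' : 'I_N) :
  (\sum_(k < mtot e) (\sum_(i < N) (inNt e i j && (nat_of_ord k == gi e i j)))
     * (\sum_(i < N) (inNt e i j' && (nat_of_ord k == gi e i j'))))%N
  = (mdeg e j * (j == j'))%N.
Proof.
transitivity (\sum_(i < N) \sum_(i' < N) \sum_(k < mtot e)
   ((inNt e i j && (nat_of_ord k == gi e i j)) * (inNt e i' j' && (nat_of_ord k == gi e i' j'))))%N.
  rewrite (eq_bigr (fun k : 'I_(mtot e) => \sum_(i < N) \sum_(i' < N)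
   ((inNt e i j && (nat_of_ord k == gi e i j)) * (inNt e i' j' && (nat_of_ord k == gi e i' j'))))%N);
   last by move=> k _; rewrite big_distrl; apply: eq_bigr => i _; rewrite big_distrr.
  rewrite exchange_big; apply: eq_bigr => i _; by rewrite exchange_big.
transitivity (\sum_(i < N) \sum_(i' < N) (inNt e i j && (i == i') && (j == j') : nat))%N.
  apply: eq_bigr => i _; apply: eq_bigr => i' _.
  case Pij: (inNt e i j); last by rewrite big1 // => k _; rewrite mul0n.
  rewrite (bigD1 (Ordinal (gi_lt Hirr Pij))) //= big1 ?addn0; last first.
    move=> k Hk; case: eqP; rewrite ?mul0n // => Ek; exfalso; move/eqP: Hk; apply.
    exact: val_inj.
  rewrite eqxx mul1n /=.
  case Pij': (inNt e i' j') => /=; last first.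
    case: eqP => // Ei; subst i'; case: eqP => // Ej; subst j'; by rewrite Pij in Pij'.
  case: eqP => Eg.
  - by have [-> ->] := gi_inj Hirr Pij Pij' Eg; rewrite !eqxx.
  - case: eqP => // Ei; subst i'; case: eqP => // Ej; subst j'; by case: Eg.
transitivity (\sum_(i < N) (inNt e i j && (j == j') : nat))%N.
  apply: eq_bigr => i _; rewrite (bigD1 i) //= eqxx andbT big1 ?addn0 // => i' Hi'.
  by rewrite eq_sym (negbTE Hi') andbF.
case: eqP => Ej; last by rewrite muln0 big1 // => i _; rewrite andbF.
rewrite muln1 -(sumB Hirr j); apply: eq_bigr => i _; by rewrite andbT /inNt /Bm Hsym.
Qed.

Local Open Scope ring_scope.
Lemma Hent (R : nzRingType) N (e : rel 'I_N) k j :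
  Hmx R e k j = (\sum_(i < N) (inNt e i j && (nat_of_ord k == gi e i j)))%:R.
Proof. by rewrite mxE natr_sum; apply: eq_bigr => i _; case: ifP. Qed.

Lemma HtH (R : nzRingType) N (e : rel 'I_N) (Hsym : symmetric e) (Hirr : irreflexive e) :
  (Hmx R e)^T *m Hmx R e = diag_mx (\row_j (mdeg e j)%:R).
Proof.
apply/matrixP => j j'; rewrite !mxE.
rewrite (eq_bigr (fun k : 'I_(mtot e) => ((\sum_(i < N) (inNt e i j && (nat_of_ord k == gi e i j)))
     * (\sum_(i < N) (inNt e i j' && (nat_of_ord k == gi e i j'))))%:R));
  last by move=> k _; rewrite mxE !Hent natrM.
rewrite -natr_sum key_nat //; by case: eqP => _; rewrite ?muln1 ?muln0.
Qed.

Lemma HbarH (R : numFieldType) N (e : rel 'I_N) (Hsym : symmetric e) (Hirr : irreflexive e) :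
  Hbar R e *m Hmx R e = 1%:M.
Proof.
rewrite /Hbar -mulmxA HtH //; apply/matrixP => i j.
rewrite mul_diag_mx !mxE; case: eqP => [->|_]; last by rewrite !mulr0n mulr0.
by rewrite !mulr1n mulVf // pnatr_eq0.
Qed.

Lemma Rsym (R : numFieldType) N (e : rel 'I_N) : (Rmx R e)^T = Rmx R e.
Proof.
rewrite /Rmx /Hbar linearB /= trmx1 !trmx_mul trmxK tr_diag_mx mulmxA //.
Qed.

Lemma Ridem (R : numFieldType) N (e : rel 'I_N) (Hsym : symmetric e) (Hirr : irreflexive e) :
  Rmx R e *m Rmx R e = Rmx R e.
Proof.
have HH : Hmx R e *m Hbar R e *m (Hmx R e *m Hbar R e) = Hmx R e *m Hbar R e.
  by rewrite mulmxA -(mulmxA _ (Hbar R e) (Hmx R e)) HbarH // mulmx1.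
rewrite /Rmx mulmxBl mul1mx mulmxBr mulmx1 HH.
by rewrite subrr subr0.
Qed.

Lemma Hrow (R : nzRingType) N (e : rel 'I_N) (Hirr : irreflexive e) (i j j' : 'I_N)
  (P : inNt e i j) :
  Hmx R e (Ordinal (gi_lt Hirr P)) j' = (j == j')%:R.
Proof.
rewrite Hent /=; congr (_%:R).
rewrite (bigD1 i) //= big1 ?addn0.
  case: (eqVneq j j') => [<-|Ej]; first by rewrite P eqxx.
  case Pj': (inNt e i j') => //=; case: eqP => // Eg.
  have [_ E] := gi_inj Hirr P Pj' Eg; by rewrite E eqxx in Ej.
move=> i' Hi'; case Pj': (inNt e i' j') => //=; case: eqP => // Eg.
have [? _] := gi_inj Hirr P Pj' Eg; subst; by rewrite eqxx in Hi'.
Qed.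

Lemma eig_le1 (R : realFieldType) N (e : rel 'I_N) (Hsym : symmetric e) (Hirr : irreflexive e) a :
  eigenvalue ((Rmx R e)^T *m Rmx R e) a -> a <= 1.
Proof.
rewrite Rsym Ridem // => /eigenvalueP [v Hv vn0].
have : (v *m Rmx R e) *m Rmx R e = a *: (a *: v) by rewrite Hv -scalemxAl Hv.
rewrite -mulmxA Ridem // Hv => /eqP; rewrite -subr_eq0 scalerA -scalerBl scaler_eq0 (negbTE vn0) orbF.
rewrite subr_eq0 => /eqP Ha.
have : a * (a - 1) = 0 by rewrite mulrBr mulr1 -Ha subrr.
move/eqP; rewrite mulf_eq0 subr_eq0 => /orP [/eqP ->|/eqP ->] //.
Qed.

Lemma eig1 (R : numFieldType) N (e : rel 'I_N) (Hsym : symmetric e) (Hirr : irreflexive e)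
  (i j : 'I_N) : e i j -> eigenvalue ((Rmx R e)^T *m Rmx R e) 1.
Proof.
move=> Eij.
have P1 : inNt e i j by rewrite /inNt Eij.
have P2 : inNt e j j by rewrite /inNt eqxx orbT.
set k1 := Ordinal (gi_lt Hirr P1); set k2 := Ordinal (gi_lt Hirr P2).
have k12 : k1 != k2.
  apply/eqP => E; have [Eq _] := gi_inj Hirr P1 P2 (congr1 val E).
  by rewrite Eq Hirr in Eij.
apply/eigenvalueP; exists (delta_mx (0 : 'I_1) k1 - delta_mx (0 : 'I_1) k2 : 'rV[R]_(mtot e)).
  rewrite Rsym Ridem // /Rmx mulmxBr mulmx1 mulmxA.
  have -> : (delta_mx (0 : 'I_1) k1 - delta_mx (0 : 'I_1) k2) *m Hmx R e = 0.
    rewrite mulmxBl -!rowE; apply/eqP; rewrite subr_eq0; apply/eqP/matrixP => x y.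
    by rewrite [LHS]mxE [RHS]mxE /k1 /k2 !Hrow.
  by rewrite mul0mx subr0 scale1r.
apply/eqP => /matrixP /(_ 0 k1); rewrite !mxE eqxx (negbTE k12) /= subr0.
by rewrite eqxx; move/eqP; rewrite oner_eq0.
Qed.

Theorem lemma5 (R : rcfType) (N : nat) (e : rel 'I_N)
  (HN : (2 <= N)%N)
  (Hsym : symmetric e) (Hirr : irreflexive e)
  (Hconn : forall i j : 'I_N, connect e i j)
  (Hnc : exists i j : 'I_N, i != j /\ ~~ e i j) :
  induced_norm_is (Rmx R e) 1.
Proof.
have [i [j [Hij _]]] := Hnc.
have [x Ex] : exists x, e i x.
  move: (Hconn i j) => /connectP [p Hp Hl].
  case: p Hp Hl => [|x p] /=; first by move=> _ E; rewrite E eqxx in Hij.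
  by move=> /andP [Ex _] _; exists x.
exists 1; split; last by rewrite sqrtr1.
split; first exact: (eig1 _ Hsym Hirr Ex).
move=> a; exact: eig_le1.
Qed.
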